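(* Let $\Gamma=A\ast B$ be a free product of two non-trivial groups $A,B$, and let $E$ be a Banach $\Gamma$-module (regarded also as an $A$-module and a $B$-module via the inclusions $A,B\hookrightarrow\Gamma$). For $f_A\in\mathrm{Q}\mathcal{Z}_{\mathrm{alt}}(A,E)$ and $f_B\in\mathrm{Q}\mathcal{Z}_{\mathrm{alt}}(B,E)$, the split map $f=f_A\ast f_B:\Gamma\to E$ is an alternating quasicocycle on $\Gamma$ with $\mathrm{def}\, f=\max\{\mathrm{def}\, f_A,\mathrm{def}\, f_B\}$. Moreover, the induced linear map \[ \mathrm{Q}\mathcal{Z}_{\mathrm{alt}}(A,E)\times\mathrm{Q}\mathcal{Z}_{\mathrm{alt}}(B,E)\to\mathrm{Q}\mathcal{Z}_{\mathrm{alt}}(\Gamma,E),\quad (f_A,f_B)\mapsto f_A\ast f_B \] extends the natural isomorphism $\mathcal{Z}^1(A,E)\times\mathcal{Z}^1(B,E)\to\mathcal{Z}^1(\Gamma,E)$.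
   Context: A Banach $\Gamma$-module is a Banach space $E$ with a linear isometric action of $\Gamma$, written $g.v$. A map $f:\Gamma\to E$ is a quasicocycle if $\mathrm{def}\, f:=\sup_{g,h\in\Gamma}\|f(gh)-f(g)-g.f(h)\|_E<\infty$; $\mathrm{Q}\mathcal{Z}(\Gamma,E)$ denotes the space of quasicocycles, and $\mathrm{Q}\mathcal{Z}_{\mathrm{alt}}(\Gamma,E)$ the subspace of alternating ones, i.e. those with $f(g)+g.f(g^{-1})=0$ for all $g$. $\mathcal{Z}^1(\Gamma,E)$ denotes the space of cocycles, i.e. maps with $f(gh)=f(g)+g.f(h)$. Every $1\neq g\in\Gamma=A\ast B$ has a unique normal form $g=a_1b_1a_2b_2\cdots a_nb_n$ with $a_i\in A$, $b_i\in B$, all non-trivial except possibly $a_1$ or $b_n$. The split map is defined by $(f_A\ast f_B)(1)=0$ and \[ (f_A\ast f_B)(a_1b_1\cdots a_nb_n)=f_A(a_1)+a_1.f_B(b_1)+a_1b_1.f_A(a_2)+\dots+a_1b_1a_2\cdots b_{n-1}a_n.f_B(b_n). \] *)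

(* Defs.v *)
From HB Require Import structures.
From mathcomp Require Import all_boot all_order all_algebra monoid.
From mathcomp Require Import all_classical all_reals all_analysis.
Set Implicit Arguments. Unset Strict Implicit. Unset Printing Implicit Defensive.
Import Order.TTheory GRing.Theory Num.Theory.
Import numFieldNormedType.Exports.
Local Open Scope classical_set_scope.
Local Open Scope ring_scope.

Section Modules.
Variables (R : realType) (E : normedModType R) (G : groupType).

Definition isometric_linear_action (act : G -> E -> E) : Prop :=
  [/\ (forall g (c : R) (u v : E), act g (c *: u + v) = c *: act g u + act g v),
      (forall g v, `|act g v| = `|v|),
      (forall v, act 1%g v = v) &
      (forall g h v, act (g * h)%g v = act g (act h v))].

Definition qc_defect (act : G -> E -> E) (f : G -> E) : \bar R :=
  ereal_sup [set x | exists g h, x = (`|f (g * h)%g - f g - act g (f h)|)%:E].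

Definition is_quasicocycle (act : G -> E -> E) (f : G -> E) : Prop :=
  (qc_defect act f < +oo)%E.

Definition is_alternating (act : G -> E -> E) (f : G -> E) : Prop :=
  forall g, f g + act g (f (g^-1)%g) = 0.

Definition alt_quasicocycle (act : G -> E -> E) (f : G -> E) : Prop :=
  is_quasicocycle act f /\ is_alternating act f.

Definition is_cocycle (act : G -> E -> E) (f : G -> E) : Prop :=
  forall g h, f (g * h)%g = f g + act g (f h).

End Modules.

Section FreeProduct.
Variables (A B G : groupType) (iA : A -> G) (iB : B -> G).

Definition letter_val (x : (A + B)%type) : G :=
  match x with inl a => iA a | inr b => iB b end.

Definition letter_nontrivial (x : (A + B)%type) : Prop :=
  match x with inl a => a <> 1%g | inr b => b <> 1%g end.

Definition letter_side (x : (A + B)%type) : bool :=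
  match x with inl _ => true | inr _ => false end.

Fixpoint reduced (w : seq (A + B)) : Prop :=
  match w with
  | [::] => True
  | x :: w' => [/\ letter_nontrivial x, reduced w' &
                  match w' with [::] => True | y :: _ => letter_side x <> letter_side y end]
  end.

Definition evalw (w : seq (A + B)) : G := foldr (fun x g => (letter_val x * g)%g) 1%g w.

(* G is the (internal) free product A * B, with A, B included via iA, iB:
   iA, iB are homomorphisms and every element of G has a unique reduced normal form. *)
Definition is_free_product : Prop :=
  [/\ (forall a a', iA (a * a')%g = (iA a * iA a')%g),
      (forall b b', iB (b * b')%g = (iB b * iB b')%g) &
      (forall g, exists! w, reduced w /\ evalw w = g)].

End FreeProduct.

Section Split.
Variables (R : realType) (E : normedModType R) (A B G : groupType)
  (iA : A -> G) (iB : B -> G) (act : G -> E -> E).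

Definition letter_f (fA : A -> E) (fB : B -> E) (x : (A + B)%type) : E :=
  match x with inl a => fA a | inr b => fB b end.

Definition split_word (fA : A -> E) (fB : B -> E) (w : seq (A + B)) : E :=
  \sum_(i < size w)
     act (@evalw A B G iA iB (take i w)) (letter_f fA fB (nth (inl 1%g) w i)).

Definition split_map (fA : A -> E) (fB : B -> E) (g : G) : E :=
  xget 0 [set v | exists w, [/\ @reduced A B w, @evalw A B G iA iB w = g
                              & v = split_word fA fB w]].

End Split.

(* Main.v *)
Require Import Defs.
From HB Require Import structures.
From mathcomp Require Import all_boot all_order all_algebra monoid.
From mathcomp Require Import all_classical all_reals all_analysis.
Set Implicit Arguments. Unset Strict Implicit. Unset Printing Implicit Defensive.
Import Order.TTheory GRing.Theory Num.Theory.
Import numFieldNormedType.Exports.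
Local Open Scope classical_set_scope.
Local Open Scope ring_scope.

Section Words.
Variables (R : realType) (E : normedModType R) (A B G : groupType)
  (iA : A -> G) (iB : B -> G) (act : G -> E -> E).
Hypothesis iAM : forall a a', iA (a * a')%g = (iA a * iA a')%g.
Hypothesis iBM : forall b b', iB (b * b')%g = (iB b * iB b')%g.
Hypothesis unf : forall g, exists! w, @reduced A B w /\ evalw iA iB w = g.
Hypothesis actL : forall g (c : R) (u v : E), act g (c *: u + v) = c *: act g u + act g v.
Hypothesis actN : forall g v, `|act g v| = `|v|.
Hypothesis act1 : forall v, act 1%g v = v.
Hypothesis actM : forall g h v, act (g * h)%g v = act g (act h v).

Local Notation ev := (evalw iA iB).
Local Notation lv := (letter_val iA iB).
Local Notation sw := (split_word iA iB act).
Local Notation nt := (@letter_nontrivial A B).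
Local Notation sd := (@letter_side A B).

Lemma actD g u v : act g (u + v) = act g u + act g v.
Proof. by rewrite -[u in LHS]scale1r actL scale1r. Qed.
Lemma act0 g : act g 0 = 0.
Proof. by apply: (addrI (act g 0)); rewrite -actD !addr0. Qed.
Lemma actNg g u : act g (- u) = - act g u.
Proof. have H := actL g (-1) u 0. by rewrite !addr0 !scaleN1r act0 addr0 in H. Qed.
Lemma actB g u v : act g (u - v) = act g u - act g v.
Proof. by rewrite actD actNg. Qed.
Lemma act_sum g I (r : seq I) (P : pred I) (F : I -> E) :
  act g (\sum_(i <- r | P i) F i) = \sum_(i <- r | P i) act g (F i).
Proof. exact: (big_morph (act g) (actD g) (act0 g)). Qed.

Lemma iA1 : iA 1%g = 1%g.
Proof. have h := iAM 1 1; rewrite mul1g in h; apply: (mulgI (iA 1)); by rewrite mulg1 -h. Qed.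
Lemma iB1 : iB 1%g = 1%g.
Proof. have h := iBM 1 1; rewrite mul1g in h; apply: (mulgI (iB 1)); by rewrite mulg1 -h. Qed.
Lemma iAV a : iA (a^-1)%g = ((iA a)^-1)%g.
Proof. by apply/esym/mulg1_eq; rewrite -iAM mulgV iA1. Qed.
Lemma iBV b : iB (b^-1)%g = ((iB b)^-1)%g.
Proof. by apply/esym/mulg1_eq; rewrite -iBM mulgV iB1. Qed.

Lemma ev_nil : ev [::] = 1%g. Proof. by []. Qed.
Lemma ev_cons x w : ev (x :: w) = (lv x * ev w)%g. Proof. by []. Qed.
Lemma ev_cat u v : ev (u ++ v) = (ev u * ev v)%g.
Proof. elim: u => [|x u IH]; first by rewrite cat0s ev_nil mul1g.
by rewrite cat_cons !ev_cons IH mulgA. Qed.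
Lemma ev_rcons u x : ev (rcons u x) = (ev u * lv x)%g.
Proof. by rewrite -cats1 ev_cat ev_cons ev_nil mulg1. Qed.


Implicit Types (u v w p : seq (A + B)) (x y z : (A + B)%type).
Lemma red_cat u x v : reduced (u ++ x :: v) <-> reduced (rcons u x) /\ reduced (x :: v).
Proof.
elim: u => [|y u IH].
  rewrite cat0s /=; split; first by case=> ? ? ?.
  by case=> ? [].
case: u IH => [|z u] IH.
  rewrite /= in IH *; split.
    by case=> ? [? ? ?] ?.
  by case=> [[? _ ?]] [? ? ?].
rewrite cat_cons rcons_cons.
change (reduced (y :: (z :: u) ++ x :: v)) with
  [/\ nt y, reduced ((z :: u) ++ x :: v) & sd y <> sd z].
change (reduced (y :: rcons (z :: u) x)) with
  [/\ nt y, reduced (rcons (z :: u) x) & sd y <> sd z].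
split.
  by case=> ? /IH [? ?] ?.
by case=> [[? ? ?] ?]; split=> //; apply/IH.
Qed.

Lemma red_rcons_l u x : reduced (rcons u x) -> reduced u.
Proof.
elim: u => [|y u IH] //.
case: u IH => [|z u] IH; first by case=> ? _ _; split.
rewrite rcons_cons.
change (reduced (y :: rcons (z :: u) x)) with
  [/\ nt y, reduced (rcons (z :: u) x) & sd y <> sd z].
by case=> ? /IH ? ?.
Qed.

Lemma red_rcons_nt u x : reduced (rcons u x) -> nt x.
Proof.
by move=> h; have [_ []] : reduced (rcons u x) /\ reduced (x :: [::]) by apply/red_cat; rewrite cats1.
Qed.

Lemma red_rcons_sub u x x' : reduced (rcons u x) -> nt x' -> sd x' = sd x ->
  reduced (rcons u x').
Proof.
move=> + ntx' sdx; elim: u => [|y u IH] //.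
case: u IH => [|z u] IH.
  by case=> ? ? ?; split=> //=; rewrite sdx.
rewrite !rcons_cons.
change (reduced (y :: rcons (z :: u) x)) with
  [/\ nt y, reduced (rcons (z :: u) x) & sd y <> sd z].
change (reduced (y :: rcons (z :: u) x')) with
  [/\ nt y, reduced (rcons (z :: u) x') & sd y <> sd z].
by case=> ? /IH ? ?.
Qed.

Lemma red_cons_sub x x' v : reduced (x :: v) -> nt x' -> sd x' = sd x ->
  reduced (x' :: v).
Proof. by case: v => [|y v] [? ? ?] ? e //; split=> //; rewrite e. Qed.

Definition linv (x : (A + B)%type) : (A + B)%type :=
  match x with inl a => inl (a^-1)%g | inr b => inr (b^-1)%g end.
Definition winv (w : seq (A + B)) := rev (map linv w).

Lemma winv_cons x w : winv (x :: w) = rcons (winv w) (linv x).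
Proof. by rewrite /winv map_cons rev_cons. Qed.

Lemma nt_linv x : nt x -> nt (linv x).
Proof.
case: x => [a|b] /= h e; apply: h.
  by rewrite -[a]invgK e invg1.
by rewrite -[b]invgK e invg1.
Qed.
Lemma sd_linv x : sd (linv x) = sd x. Proof. by case: x. Qed.
Lemma lv_linv x : lv (linv x) = ((lv x)^-1)%g.
Proof. by case: x => [a|b] /=; rewrite ?iAV ?iBV. Qed.

Lemma red_winv w : reduced w -> reduced (winv w).
Proof.
elim: w => [|x w IH] // rw.
rewrite winv_cons.
case: w IH rw => [|y w] IH.
  by case=> ? _ _; split=> //; apply: nt_linv.
case=> ntx rw sxy.
have [nty _ _] := rw.
rewrite winv_cons -!cats1 -catA cats1 /=.
apply/red_cat; split; first by rewrite -winv_cons; apply: IH.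
split=> //; first exact: nt_linv.
  by split=> //; apply: nt_linv.
by rewrite !sd_linv => e; apply: sxy.
Qed.

Lemma ev_winv w : ev (winv w) = ((ev w)^-1)%g.
Proof.
elim: w => [|x w IH]; first by rewrite /winv /= invg1.
by rewrite winv_cons ev_rcons IH lv_linv ev_cons invgM.
Qed.

Section SW.
Variables (fA : A -> E) (fB : B -> E).
Local Notation lf := (letter_f fA fB).
Local Notation sw := (split_word iA iB act fA fB).

Lemma sw_nil : sw [::] = 0.
Proof. by rewrite /split_word big_ord0. Qed.
Lemma sw_cons x w : sw (x :: w) = lf x + act (lv x) (sw w).
Proof.
rewrite /split_word big_ord_recl; congr (_ + _); first by rewrite /= act1.
rewrite act_sum; apply: eq_bigr => i _.
by rewrite /= add0n actM.
Qed.
Lemma sw_cat u v : sw (u ++ v) = sw u + act (ev u) (sw v).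
Proof.
elim: u => [|x u IH]; first by rewrite cat0s sw_nil add0r ev_nil act1.
by rewrite cat_cons !sw_cons IH ev_cons actD actM addrA.
Qed.
Lemma sw_rcons u x : sw (rcons u x) = sw u + act (ev u) (lf x).
Proof. by rewrite -cats1 sw_cat sw_cons sw_nil act0 addr0. Qed.

Lemma F_ev w : reduced w -> split_map iA iB act fA fB (ev w) = sw w.
Proof.
move=> rw; rewrite /split_map; apply: xget_unique; first by exists w.
move=> y [w' [rw' ew' ->]].
have [w0 [_ Hu]] := unf (ev w).
by rewrite -(Hu w' (conj rw' ew')) -(Hu w (conj rw erefl)).
Qed.

Local Notation F := (split_map iA iB act fA fB).

Lemma sw_winv_alt (altl : forall x, lf x + act (lv x) (lf (linv x)) = 0) w :
  sw w + act (ev w) (sw (winv w)) = 0.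
Proof.
elim: w => [|x w IH]; first by rewrite /winv /= sw_nil act0 addr0.
rewrite winv_cons sw_rcons sw_cons ev_cons actM actD ev_winv -(actM (ev w)) mulgV act1.
rewrite -(altl x) -addrA; congr (_ + _).
by rewrite actD addrA -actD IH act0 add0r.
Qed.

Definition D g h := F (g * h)%g - F g - act g (F h).

Lemma D_cat u v : reduced u -> reduced v -> reduced (u ++ v) -> D (ev u) (ev v) = 0.
Proof. by move=> ru rv ruv; rewrite /D -ev_cat !F_ev // sw_cat addrAC addrK subrr. Qed.

Lemma zmod_id1 (a b c d e : E) : (a + (b + c)) - (a + d) - (e + c) = b - d - e.
Proof. by rewrite [a + _]addrC addrKA addrAC [RHS]addrAC [e + c]addrC addrKA. Qed.

Lemma zmod_id2 (x s a b c : E) : a + b = 0 -> x - (s + a) - (b + c) = x - s - c.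
Proof.
move=> h; rewrite -addrA -opprD -addrA [a + (b + c)]addrA h add0r opprD addrA //.
Qed.

Lemma D_merge p y z m v : lv m = (lv y * lv z)%g -> reduced (rcons p y) ->
  reduced (z :: v) -> reduced (p ++ m :: v) ->
  D (ev (rcons p y)) (ev (z :: v)) = act (ev p) (lf m - lf y - act (lv y) (lf z)).
Proof.
move=> hm r1 r2 r3.
have e : (ev (rcons p y) * ev (z :: v))%g = ev (p ++ m :: v).
  by rewrite ev_rcons ev_cat !ev_cons hm !mulgA.
rewrite /D e !F_ev // sw_cat sw_rcons !sw_cons ev_rcons hm.
rewrite ?actM ?actD ?actB ?actM ?actD ?actB ?actM.
rewrite !actNg; exact: zmod_id1.
Qed.

Lemma D_cancel p y z v : (lv y * lv z)%g = 1%g -> lf y + act (lv y) (lf z) = 0 ->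
  reduced (rcons p y) -> reduced (z :: v) -> reduced p -> reduced v ->
  D (ev (rcons p y)) (ev (z :: v)) = D (ev p) (ev v).
Proof.
move=> hyz h0 r1 r2 r3 r4.
have e : (ev (rcons p y) * ev (z :: v))%g = (ev p * ev v)%g.
  by rewrite ev_rcons ev_cons mulgA -(mulgA (ev p)) hyz mulg1.
rewrite /D e !F_ev // sw_rcons sw_cons ev_rcons actM (actD (lv y)).
rewrite -[act (lv y) (act (lv z) _)]actM hyz act1 actD.
apply: zmod_id2.
by rewrite -actD h0 act0.
Qed.

Lemma two_eq0 (v : E) : v + v = 0 -> v = 0.
Proof.
move=> h; have : (2%:R : R) *: v = 0 by rewrite scaler_nat mulr2n.
by move/eqP; rewrite scaler_eq0 pnatr_eq0 /= => /eqP.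
Qed.

Lemma D_zero g h : D g h = 0 -> F (g * h)%g = F g + act g (F h).
Proof. by rewrite /D => /eqP; rewrite subr_eq0 subr_eq => /eqP ->; rewrite addrC. Qed.

Section Alt.
Hypothesis altA : forall a, fA a + act (iA a) (fA (a^-1)%g) = 0.
Hypothesis altB : forall b, fB b + act (iB b) (fB (b^-1)%g) = 0.

Lemma fA1 : fA 1%g = 0.
Proof. by apply: two_eq0; have := altA 1; rewrite invg1 iA1 act1. Qed.
Lemma fB1 : fB 1%g = 0.
Proof. by apply: two_eq0; have := altB 1; rewrite invg1 iB1 act1. Qed.

Lemma alt_letter x : lf x + act (lv x) (lf (linv x)) = 0.
Proof. by case: x => [a|b] /=; [exact: altA | exact: altB]. Qed.

Definition GoodAB (r : R) :=
  (exists a a', r = `|fA (a * a')%g - fA a - act (iA a) (fA a')|) \/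
  (exists b b', r = `|fB (b * b')%g - fB b - act (iB b) (fB b')|).

Lemma Good0 : GoodAB `|0 : E|.
Proof. by left; exists 1%g, 1%g; rewrite mulg1 fA1 act0 !subr0. Qed.

Lemma Good_D v : forall u, reduced u -> reduced v -> GoodAB `|D (ev u) (ev v)|.
Proof.
elim: v => [|z v IH] u ru rv.
  by rewrite (D_cat ru rv) ?cats0 //; exact: Good0.
case/lastP: u ru => [|p y] ru.
  by rewrite (D_cat ru rv) //; exact: Good0.
have rp := red_rcons_l ru.
have nty := red_rcons_nt ru.
have [ntz rv' hz] := rv.
case: (boolP (sd y == sd z)) => [/eqP syz | /eqP syz]; last first.
  rewrite (D_cat ru rv); first exact: Good0.
  rewrite cat_rcons; apply/red_cat; split=> //.
case: y z syz ru rv nty ntz hz => [a|b] [a'|b'] //= _ ru rv nty ntz hz.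
  case: (eqVneq (a * a')%g 1%g) => [h1 | h1].
    rewrite (@D_cancel p (inl a) (inl a') v) //; first exact: IH.
      by rewrite /= -iAM h1 iA1.
    have -> : a' = (a^-1)%g by apply/esym/mulg1_eq.
    exact: altA.
  rewrite (@D_merge p (inl a) (inl a') (inl (a * a')%g) v) //=.
      by left; exists a, a'; rewrite actN.
  apply/red_cat; split.
    by apply: (red_rcons_sub ru) => //=; apply/eqP.
  by apply: (@red_cons_sub (inl a') _ v rv) => //=; apply/eqP.
case: (eqVneq (b * b')%g 1%g) => [h1 | h1].
  rewrite (@D_cancel p (inr b) (inr b') v) //; first exact: IH.
    by rewrite /= -iBM h1 iB1.
  have -> : b' = (b^-1)%g by apply/esym/mulg1_eq.
  exact: altB.
rewrite (@D_merge p (inr b) (inr b') (inr (b * b')%g) v) //=.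
    by right; exists b, b'; rewrite actN.

apply/red_cat; split.
  by apply: (red_rcons_sub ru) => //=; apply/eqP.
by apply: (@red_cons_sub (inr b') _ v rv) => //=; apply/eqP.
Qed.

Lemma F_iA a : F (iA a) = fA a.
Proof.
case: (eqVneq a 1%g) => [->|h].
  by rewrite iA1 -ev_nil F_ev // sw_nil fA1.
have r : reduced [:: (inl a : (A + B)%type)] by split=> //; apply/eqP.
by have := F_ev r; rewrite sw_cons sw_nil act0 addr0 ev_cons ev_nil mulg1.
Qed.
Lemma F_iB b : F (iB b) = fB b.
Proof.
case: (eqVneq b 1%g) => [->|h].
  by rewrite iB1 -ev_nil F_ev // sw_nil fB1.
have r : reduced [:: (inr b : (A + B)%type)] by split=> //; apply/eqP.
by have := F_ev r; rewrite sw_cons sw_nil act0 addr0 ev_cons ev_nil mulg1.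
Qed.

Lemma F_alt g : F g + act g (F (g^-1)%g) = 0.
Proof.
have [w [[rw <-] _]] := unf g.
rewrite -ev_winv !F_ev //; last exact: red_winv.
exact: sw_winv_alt alt_letter w.
Qed.

Lemma Good_all g h : GoodAB `|D g h|.
Proof.
have [u [[ru <-] _]] := unf g.
have [v [[rv <-] _]] := unf h.
exact: Good_D.
Qed.
End Alt.

End SW.
Lemma main_sec :
  let actA := fun a => act (iA a) in
  let actB := fun b => act (iB b) in
  let split := split_map iA iB act in
  (forall (fA : A -> E) (fB : B -> E),
     alt_quasicocycle actA fA -> alt_quasicocycle actB fB ->
     [/\ is_alternating act (split fA fB),
         is_quasicocycle act (split fA fB) &
         qc_defect act (split fA fB) = maxe (qc_defect actA fA) (qc_defect actB fB)]) /\
  (forall (c : R) (fA fA' : A -> E) (fB fB' : B -> E),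
     alt_quasicocycle actA fA -> alt_quasicocycle actA fA' ->
     alt_quasicocycle actB fB -> alt_quasicocycle actB fB' ->
     split (fun a => c *: fA a + fA' a) (fun b => c *: fB b + fB' b)
     = (fun g => c *: split fA fB g + split fA' fB' g)) /\
  (forall (fA : A -> E) (fB : B -> E),
     is_cocycle actA fA -> is_cocycle actB fB ->
     [/\ is_cocycle act (split fA fB),
         (forall a, split fA fB (iA a) = fA a) &
         (forall b, split fA fB (iB b) = fB b)]) /\
  (forall f : G -> E, is_cocycle act f ->
     split (fun a => f (iA a)) (fun b => f (iB b)) = f).
Proof.
move=> actA actB split; rewrite /split /actA /actB.
split; [|split; [|split]].
- move=> fA fB [qA alA] [qB alB].
  have altA : forall a, fA a + act (iA a) (fA (a^-1)%g) = 0 := alA.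
  have altB : forall b, fB b + act (iB b) (fB (b^-1)%g) = 0 := alB.
  have hdef : qc_defect act (split_map iA iB act fA fB) =
      maxe (qc_defect (fun a => act (iA a)) fA) (qc_defect (fun b => act (iB b)) fB).
    apply/eqP; rewrite eq_le; apply/andP; split.
      apply: ge_ereal_sup => _ [g [h ->]].
      case: (Good_all altA altB g h) => [[a [a' e]]|[b [b' e]]];
        rewrite /D in e; rewrite e le_max; apply/orP; [left|right];
        apply: ereal_sup_ubound; [by exists a, a' | by exists b, b'].
    rewrite ge_max; apply/andP; split; apply: ereal_sup_le.
      by move=> _ [a [a' ->]]; exists (iA a), (iA a'); rewrite -iAM !(F_iA _ altA).
    by move=> _ [b [b' ->]]; exists (iB b), (iB b'); rewrite -iBM !(F_iB _ altB).
  split=> //.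
    by move=> g; exact: (F_alt altA altB).
  by rewrite /is_quasicocycle hdef gt_max; apply/andP; split.
- move=> c fA fA' fB fB' _ _ _ _; apply: funext => g /=.
  have [w [[rw <-] _]] := unf g.
  rewrite !F_ev //.
  elim: w {rw} => [|x w IH]; first by rewrite !sw_nil scaler0 addr0.
  rewrite !sw_cons IH actL.
  by case: x => [a|b] /=; rewrite scalerDr addrACA.
- move=> fA fB cA0 cB0.
  have cA : forall a a', fA (a * a')%g = fA a + act (iA a) (fA a') := cA0.
  have cB : forall b b', fB (b * b')%g = fB b + act (iB b) (fB b') := cB0.
  have fA1 : fA 1%g = 0.
    have := cA 1%g 1%g; rewrite mulg1 iA1 act1 => h.
    by apply: (addrI (fA 1%g)); rewrite addr0 -h.
  have fB1 : fB 1%g = 0.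
    have := cB 1%g 1%g; rewrite mulg1 iB1 act1 => h.
    by apply: (addrI (fB 1%g)); rewrite addr0 -h.
  have altA : forall a, fA a + act (iA a) (fA (a^-1)%g) = 0.
    by move=> a; have := cA a (a^-1)%g; rewrite mulgV fA1 => ->.
  have altB : forall b, fB b + act (iB b) (fB (b^-1)%g) = 0.
    by move=> b; have := cB b (b^-1)%g; rewrite mulgV fB1 => ->.
  split.
  + move=> g h; apply: D_zero; apply/eqP; rewrite -normr_eq0.
    case: (Good_all altA altB g h) => [[a [a' ->]]|[b [b' ->]]].
      by rewrite cA addrAC addrK subrr normr0.
    by rewrite cB addrAC addrK subrr normr0.
  + exact: (F_iA _ altA).
  + exact: (F_iB _ altB).
- move=> f cf; apply: funext => g.
  have f1 : f 1%g = 0.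
    have := cf 1%g 1%g; rewrite mulg1 act1 => h.
    by apply: (addrI (f 1%g)); rewrite addr0 -h.
  have [w [[rw <-] _]] := unf g.
  rewrite F_ev //.
  elim: w {rw} => [|x w IH]; first by rewrite sw_nil ev_nil f1.
  by rewrite sw_cons IH ev_cons cf; case: x.
Qed.

End Words.

Unset Implicit Arguments.
Set Strict Implicit.
Theorem proposition2p1 (R : realType) (E : completeNormedModType R)
  (A B G : groupType) (iA : A -> G) (iB : B -> G) (act : G -> E -> E) :
  (exists a : A, a <> 1%g) -> (exists b : B, b <> 1%g) ->
  is_free_product iA iB ->
  isometric_linear_action act ->
  let actA := fun a => act (iA a) in
  let actB := fun b => act (iB b) in
  let split := split_map iA iB act in
  (forall (fA : A -> E) (fB : B -> E),
     alt_quasicocycle actA fA -> alt_quasicocycle actB fB ->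
     [/\ is_alternating act (split fA fB),
         is_quasicocycle act (split fA fB) &
         qc_defect act (split fA fB) = maxe (qc_defect actA fA) (qc_defect actB fB)]) /\
  (forall (c : R) (fA fA' : A -> E) (fB fB' : B -> E),
     alt_quasicocycle actA fA -> alt_quasicocycle actA fA' ->
     alt_quasicocycle actB fB -> alt_quasicocycle actB fB' ->
     split (fun a => c *: fA a + fA' a) (fun b => c *: fB b + fB' b)
     = (fun g => c *: split fA fB g + split fA' fB' g)) /\
  (forall (fA : A -> E) (fB : B -> E),
     is_cocycle actA fA -> is_cocycle actB fB ->
     [/\ is_cocycle act (split fA fB),
         (forall a, split fA fB (iA a) = fA a) &
         (forall b, split fA fB (iB b) = fB b)]) /\
  (forall f : G -> E, is_cocycle act f ->
     split (fun a => f (iA a)) (fun b => f (iB b)) = f).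
Proof.
move=> _ _ [iAM iBM unf] [actL actN act1 actM].
exact: (main_sec iAM iBM unf actL actN act1 actM).
Qed.
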